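(* For $n\ge0$ let $d_n$ be the number of FQ-legal index sets contained in $\{1,\dots,n\}$ (including the empty set; $d_0=1$); for $n\ge1$ let $c_n$ be the number of FQ-legal index sets contained in $\{1,\dots,n\}$ that contain $n$, with $c_0=1$; and for $n\ge1$ let $b_n$ be the number of FQ-legal index sets contained in $\{1,\dots,n\}$ that contain both $n$ and $n-2$. Then for all $n\ge7$, \[ d_n=c_n+c_{n-1}+\cdots+c_0=c_n+d_{n-1},\qquad c_n=d_{n-5}+c_{n-2}-b_{n-2},\qquad b_n=d_{n-7}, \] and for all $n\ge9$, \[ d_n=d_{n-1}+d_{n-2}-d_{n-3}+d_{n-5}-d_{n-9}. \]
   Context: An FQ-legal index set is a finite set $S$ of positive integers such that no two elements of $S$ differ by $1$, $3$ or $4$, and $S$ does not contain both $1$ and $3$. (These are exactly the index sets $\{\ell_1,\dots,\ell_t\}$ of FQ-legal decompositions $q_{\ell_1}+\cdots+q_{\ell_t}$ with respect to the Fibonacci Quilt sequence $(q_i)$, where an FQ-legal decomposition uses distinct indices with pairwise differences not in $\{1,3,4\}$ and not both indices $1$ and $3$.) First values: $(d_1,\dots,d_{13})=(2,3,4,6,8,11,15,21,30,42,59,82,114)$. *)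

(* Defs.v *)
From mathcomp Require Import all_boot all_order all_algebra.
Set Implicit Arguments. Unset Strict Implicit. Unset Printing Implicit Defensive.

(* An index set contained in {1,...,n} is represented as a set S of 'I_n.+1
   with 0 \notin S.  FQ-legal: no two elements differ by 1, 3 or 4, and not
   both 1 and 3 in S. *)
Definition fq_legal (m : nat) (S : {set 'I_m}) : bool :=
  [&& [forall i : 'I_m, (val i == 0) ==> (i \notin S)],
      [forall i : 'I_m, forall j : 'I_m,
         ((i \in S) && (j \in S) && (val i < val j)) ==>
           ((val j - val i) \notin [:: 1; 3; 4])] &
      ~~ [exists i : 'I_m, exists j : 'I_m,
           [&& i \in S, j \in S, val i == 1 & val j == 3]]].

Definition d (n : nat) : nat :=
  #|[set S : {set 'I_n.+1} | fq_legal S]|.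

Definition c (n : nat) : nat :=
  if n is 0 then 1 else
  #|[set S : {set 'I_n.+1} | fq_legal S && (ord_max \in S)]|.

(* number of FQ-legal index sets in {1..n} containing n and n-2
   (only used for n >= 5 so n-2 >= 1) *)
Definition b (n : nat) : nat :=
  #|[set S : {set 'I_n.+1} | [&& fq_legal S, ord_max \in S &
       [exists i : 'I_n.+1, (val i == n - 2) && (i \in S)]]]|.

(* Main.v *)
Require Import Defs.
From mathcomp Require Import all_boot all_order all_algebra.
From mathcomp Require Import zify.
Import GRing.Theory Num.Theory.
Set Implicit Arguments. Unset Strict Implicit. Unset Printing Implicit Defensive.

Definition pS m (S : {set 'I_m.+1}) (x : nat) : bool := (x < m.+1) && (inord x \in S).

Definition LP (p : nat -> bool) : Prop :=
  [/\ ~~ p 0,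
      (forall x y, p x -> p y -> x < y -> [/\ y - x <> 1, y - x <> 3 & y - x <> 4]) &
      ~~ (p 1 && p 3)].

Lemma pS_val m (S : {set 'I_m.+1}) (i : 'I_m.+1) : pS S i = (i \in S).
Proof. by rewrite /pS ltn_ord inord_val. Qed.

Lemma pS_vval m (S : {set 'I_m.+1}) (i : 'I_m.+1) : pS S (val i) = (i \in S).
Proof. exact: pS_val. Qed.

Lemma vinordK m k : k < m.+1 -> val (inord k : 'I_m.+1) = k.
Proof. exact: inordK. Qed.

Lemma pS_le m (S : {set 'I_m.+1}) x : pS S x -> x <= m.
Proof. by case/andP. Qed.

Lemma legalP m (S : {set 'I_m.+1}) : fq_legal S <-> LP (pS S).
Proof.
split.
- case/and3P => /forallP H0 /forallP H1 H2; split.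
  + apply/negP => /andP [_ H]; have := H0 (inord 0). rewrite vinordK // eqxx H. by [].
  + move=> x y /andP[xm xS] /andP[ym yS] xy.
    have := H1 (inord x) => /forallP /(_ (inord y)).
    rewrite xS yS !vinordK //= xy /= !inE => /negP H.
    split => E; apply: H; rewrite E //.
  + apply/negP => /andP[/andP[h1 i1] /andP[h3 i3]]; move/negP: H2; apply.
    apply/existsP; exists (inord 1); apply/existsP; exists (inord 3).
    by rewrite i1 i3 !vinordK.
- case => H0 H1 H2; apply/and3P; split.
  + apply/forallP => i; apply/implyP => /eqP i0; rewrite -pS_vval i0; exact: H0.
  + apply/forallP => i; apply/forallP => j; apply/implyP => /andP[/andP[iS jS] ij].
    rewrite -!pS_vval in iS jS.
    have [a1 a3 a4] := H1 _ _ iS jS ij.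
    rewrite !inE; apply/negP => /or3P [] /eqP; by [].
  + apply/negP => /existsP [i /existsP [j /and4P [iS jS /eqP i1 /eqP j3]]].
    move/negP: H2; apply. have -> : pS S 1 = pS S (val i) by rewrite i1.
    have -> : pS S 3 = pS S (val j) by rewrite j3.
    by rewrite !pS_vval iS jS.
Qed.

Lemma LP_sub (p q : nat -> bool) : LP p -> (forall x, q x -> p x) -> LP q.
Proof.
case=> H0 H1 H2 Hq; split.
- by apply/negP => /Hq; apply/negP.
- by move=> x y /Hq px /Hq py; apply: H1.
- by apply/negP => /andP[/Hq a /Hq b]; move/negP: H2; apply; rewrite a b.
Qed.

Lemma set_ext m (S S' : {set 'I_m.+1}) : (forall x, x <= m -> pS S x = pS S' x) -> S = S'.
Proof. move=> H; apply/setP => i; rewrite -!pS_val; apply: H; exact: (ltn_ord i). Qed.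

Lemma card_restrict m k (T : nat -> bool) :
  k <= m ->
  (forall x y, k < x <= m -> k < y <= m -> T x -> T y -> x < y ->
     [/\ y - x <> 1, y - x <> 3 & y - x <> 4]) ->
  (forall t, k < t <= m -> T t -> k + 5 <= t /\ 3 < t) ->
  #|[set S : {set 'I_m.+1} | fq_legal S &&
      [forall i : 'I_m.+1, (k < i) ==> ((i \in S) == T i)]]| = d k.
Proof.
move=> km HTT HT.
pose g := fun R : {set 'I_k.+1} => [set j : 'I_m.+1 | if j <= k then pS R j else T j].
have pg : forall R x, x <= m -> pS (g R) x = if x <= k then pS R x else T x.
  by move=> R x xm; rewrite {1}/pS ltnS xm /= inE inordK.
have ginj : injective g.
  move=> R1 R2 E; apply: set_ext => x xk.
  have xm : x <= m by apply: leq_trans xk km.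
  by have := pg R1 x xm; rewrite E pg // xk => ->.
rewrite /d -(card_imset _ ginj); apply: eq_card => S; rewrite inE.
apply/idP/imsetP.
- case/andP => /legalP HS /forallP HA; exists [set i : 'I_k.+1 | pS S i].
  + rewrite inE; apply/legalP; apply: (LP_sub HS) => x.
    by rewrite /pS inE; case/andP => xk; rewrite inordK.
  + apply: set_ext => x xm; rewrite pg //; case: ifP => xk.
      by rewrite /pS inE inordK ?ltnS // xk.
    have := HA (inord x); rewrite inordK ?ltnS // ltnNge xk /= => /eqP <-.
    by rewrite /pS ltnS xm.
- case=> R; rewrite inE => /legalP HR ->; apply/andP; split.
  + apply/legalP.
    have HQ : LP (fun x => (x <= m) && (if x <= k then pS R x else T x)).
      case: HR => H0 H1 H2; split.
      * by rewrite leq0n /= (negbTE H0).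
      * move=> x y /andP[xm qx] /andP[ym qy] xy.
        move: qx qy; case: (leqP x k) => xk; case: (leqP y k) => yk qx qy.
        -- exact: H1.
        -- move: (HT y); rewrite yk ym => /(_ isT qy) [h5 _]; split; lia.
        -- lia.
        -- by apply: HTT => //; apply/andP.
      * apply/negP => /andP[/andP[m1 q1] /andP[m3 q3]].
        move: q1 q3; case: (leqP 3 k) => k3.
          rewrite (leq_trans _ k3) // => q1 q3; move/negP: H2; apply; by rewrite q1 q3.
        move=> q1; case: (leqP 1 k) => _ q3.
          move: (HT 3); rewrite k3 m3 => /(_ isT q3) [_ h]; lia.
          move: (HT 3); rewrite k3 m3 => /(_ isT q3) [_ h]; lia.
    apply: (LP_sub HQ) => x qx; have xm := pS_le qx; move: qx; rewrite pg // => ->.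
    by rewrite xm.
  + by apply/forallP => i; apply/implyP => ki; rewrite inE leqNgt ki.
Qed.

Lemma agree_intro m k (S : {set 'I_m.+1}) (T : nat -> bool) :
  (forall x, k < x <= m -> pS S x = T x) ->
  [forall i : 'I_m.+1, (k < i) ==> ((i \in S) == T i)].
Proof.
move=> H; apply/forallP => i; apply/implyP => ki.
by rewrite -pS_val H // ki -ltnS ltn_ord.
Qed.

Lemma agree_elim m k (S : {set 'I_m.+1}) (T : nat -> bool) :
  [forall i : 'I_m.+1, (k < i) ==> ((i \in S) == T i)] ->
  (forall x, k < x <= m -> pS S x = T x).
Proof.
move=> /forallP H x /andP[kx xm]; have := H (inord x).
rewrite inordK ?ltnS // kx /= => /eqP <-.
by rewrite /pS ltnS xm.
Qed.

Lemma pS_max m (S : {set 'I_m.+1}) : pS S m = (ord_max \in S).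
Proof. exact: (pS_val S ord_max). Qed.

Lemma bE m (S : {set 'I_m.+1}) :
  [exists i : 'I_m.+1, (val i == m - 2) && (i \in S)] = pS S (m - 2).
Proof.
apply/existsP/idP => [[i /andP[/eqP <- iS]] | H]; first by rewrite pS_vval.
exists (inord (m - 2)); case/andP: H => lt H; by rewrite vinordK // eqxx H.
Qed.

Lemma dA m : 0 < m -> d m = c m + d (m - 1).
Proof.
case: m => // m _; rewrite /c subn1 /=.
rewrite {1}/d -(cardsID [set S : {set 'I_m.+2} | ord_max \in S] [set S | fq_legal S]).
congr (_ + _); first by apply: eq_card => S; rewrite !inE.
rewrite -(@card_restrict m.+1 m (fun _ => false)) //.
apply: eq_card => S; rewrite !inE; apply/idP/idP.
- case/andP => nS L; rewrite L; apply: (@agree_intro _ _ _ (fun _ => false)) => x /andP[mx xm].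
  have -> : x = m.+1 by lia.
  by rewrite pS_max (negbTE nS).
- case/andP => L /(@agree_elim _ _ _ (fun _ => false)) H; rewrite L andbT -pS_max H //; lia.
Qed.

Lemma cB m : 5 <= m ->
  #|[set S : {set 'I_m.+1} | [&& fq_legal S, ord_max \in S & ~~ pS S (m - 2)]]| = d (m - 5).
Proof.
move=> m5.
have e1 : m - 5 < m <= m by apply/andP; split; lia.
have e2 : m - 5 < m - 2 <= m by apply/andP; split; lia.
have e3 : (m - 2 == m) = false by apply/eqP; lia.
rewrite -(@card_restrict m (m - 5) (fun x => x == m)); first last.
- by move=> t _ /eqP ->; lia.
- by move=> x y _ _ /eqP -> /eqP ->; lia.
- lia.
apply: eq_card => S; rewrite !inE; apply/idP/idP.
- case/and3P => L mS n2; rewrite L; apply: (@agree_intro _ _ _ (fun x => x == m)) => x /andP[kx xm] /=.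
  have pm : pS S m by rewrite pS_max.
  case: (eqVneq x m) => [-> | ne]; first by rewrite pm.
  apply/negbTE/negP => px.
  have [_ H1 _] := (proj1 (legalP S)) L.
  have xlt : x < m by lia.
  have [a1 a3 a4] := H1 _ _ px pm xlt.
  have : x <> m - 2 by move=> E; move: n2; rewrite -E px.
  move/eqP: ne => ne.
  clear -kx xm ne a1 a3 a4 m5 xlt; lia.
- case/andP => L /(@agree_elim _ _ _ (fun x => x == m)) H.
  by rewrite L -pS_max (H m) // (H (m - 2)) //= eqxx e3.
Qed.

Lemma bC m : 7 <= m -> b m = d (m - 7).
Proof.
move=> m7; rewrite /b.
have e1 : m - 7 < m <= m by apply/andP; split; lia.
have e2 : m - 7 < m - 2 <= m by apply/andP; split; lia.
rewrite -(@card_restrict m (m - 7) (fun x => (x == m) || (x == m - 2))); first last.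
- by move=> t _ /orP[] /eqP ->; lia.
- by move=> x y _ _ /orP[] /eqP -> /orP[] /eqP -> xy; split; lia.
- lia.
apply: eq_card => S; rewrite !inE bE; apply/idP/idP.
- case/and3P => L mS n2; rewrite L; apply: (@agree_intro _ _ _ (fun x => (x == m) || (x == m - 2))) => x /andP[kx xm] /=.
  have pm : pS S m by rewrite pS_max.
  case: (eqVneq x m) => [-> | ne]; first by rewrite pm.
  case: (eqVneq x (m - 2)) => [-> | ne2]; first by rewrite n2.
  apply/negbTE/negP => px.
  have [_ H1 _] := (proj1 (legalP S)) L.
  have xlt : x < m by move/eqP: ne => ne; clear -ne xm; lia.
  have [a1 a3 a4] := H1 _ _ px pm xlt.
  move/eqP: ne => ne; move/eqP: ne2 => ne2.
  case: (ltnP x (m - 2)) => xl.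
    have [b1 b3 b4] := H1 _ _ px n2 xl.
    clear -kx xm ne ne2 a1 a3 a4 b1 b3 b4 m7 xlt xl; lia.
  clear -kx xm ne ne2 a1 a3 a4 m7 xlt xl; lia.
- case/andP => L /(@agree_elim _ _ _ (fun x => (x == m) || (x == m - 2))) H.
  by rewrite L -pS_max (H m) // (H (m - 2)) //= !eqxx orbT.
Qed.

Lemma d0 : d 0 = 1.
Proof.
rewrite /d (_ : [set S : {set 'I_1} | fq_legal S] = [set set0]) ?cards1 //.
apply/setP => S; rewrite !inE.
apply/idP/eqP => [/legalP [H0 _ _] | ->].
- apply: set_ext => x; rewrite leqn0 => /eqP ->.
  by rewrite (negbTE H0) /pS inE andbF.
- apply/legalP; apply: (@LP_sub (fun _ => false)) => [|x]; last by rewrite /pS inE andbF.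
  by split.
Qed.

Lemma cS m : 0 < m ->
  c m = #|[set S : {set 'I_m.+1} | [&& fq_legal S, ord_max \in S & ~~ pS S (m - 2)]]| + b m.
Proof.
case: m => // m _; rewrite /c /b addnC.
rewrite -(cardsID [set S : {set 'I_m.+2} | pS S (m.+1 - 2)]
                  [set S : {set 'I_m.+2} | fq_legal S && (ord_max \in S)]).
congr (_ + _); apply: eq_card => S; rewrite !inE ?bE.
- by rewrite andbA.
- by rewrite andbC andbA.
Qed.

Lemma cF m : 7 <= m -> c m = d (m - 5) + d (m - 7).
Proof. move=> m7; rewrite cS ?cB ?bC //; lia. Qed.

Lemma dsum n : d n = (\sum_(0 <= k < n.+1) c k)%N.
Proof.
elim: n => [|n IH]; first by rewrite big_nat1 d0.
by rewrite big_nat_recr //= -IH (dA (ltn0Sn n)) subn1 /= addnC.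
Qed.

Local Open Scope ring_scope.

Theorem mainTheorem10 :
  (forall n : nat, (7 <= n)%N ->
     [/\ d n = (\sum_(0 <= k < n.+1) c k)%N,
         d n = (c n + d n.-1)%N,
         (c n)%:Z = (d (n - 5))%:Z + (c (n - 2))%:Z - (b (n - 2))%:Z &
         b n = d (n - 7)]) /\
  (forall n : nat, (9 <= n)%N ->
     (d n)%:Z = (d n.-1)%:Z + (d (n - 2))%:Z - (d (n - 3))%:Z
                + (d (n - 5))%:Z - (d (n - 9))%:Z).
Proof.
split.
- move=> n n7; split.
  + exact: dsum.
  + by rewrite -subn1; apply: dA; lia.
  + have h1 := cF n7.
    have h2 : c (n - 2) = d (n - 7) + b (n - 2).
      rewrite cS ?cB; [congr (_ + _); congr d; lia | lia | lia].
    rewrite h1 h2; lia.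
  + exact: bC.
- move=> n n9.
  have h1 := dA (m := n) ltac:(lia).
  have h2 := dA (m := (n - 2)%N) ltac:(lia).
  have h3 : c n = (d (n - 5) + d (n - 7))%N by apply: cF; lia.
  have h4 : c (n - 2) = (d (n - 7) + d (n - 9))%N.
    rewrite cF; [congr (_ + _)%N; congr d; lia | lia].
  rewrite (_ : (n - 2 - 1 = n - 3)%N) in h2; last lia.
  rewrite -subn1; lia.
Qed.
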